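(* Let $h\ge 2$ and let $D$ be a set of positive integers. Suppose there exist an integer $t$ with $2\le t\le 2h-1$ and positive integers $f_1,\dots,f_t$ with $f_1+\dots+f_t\le 2h$ such that $\sup_{m\ge 1} R_{f_1,\dots,f_t,D}(m)=\infty$. Then there exist an integer $t'$ with $2\le t'\le 2h-1$ and positive integers $f'_1,\dots,f'_{t'}$ with $f'_1+\dots+f'_{t'}\le 2h$ such that $\sup_{m\ge 1} R^{\mathrm{Dist}}_{f'_1,\dots,f'_{t'},D}(m)=\infty$.
   Context: For positive integers $f_1,\dots,f_t$, a set $D$ of positive integers and a positive integer $m$, $R_{f_1,\dots,f_t,D}(m)$ is the number of $t$-tuples $(d_1,\dots,d_t)$ of pairwise distinct elements of $D$ with $f_1d_1+\dots+f_td_t=m$, and $R^{\mathrm{Dist}}_{f_1,\dots,f_t,D}(m)$ is the largest integer $q\ge0$ such that there exist $qt$ pairwise distinct elements $d_1,\dots,d_{qt}\in D$ with $f_1d_{jt+1}+\dots+f_td_{jt+t}=m$ for every $0\le j\le q-1$. *)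

(* Defs.v *)
From mathcomp Require Import all_boot.
Set Implicit Arguments. Unset Strict Implicit. Unset Printing Implicit Defensive.

(* R_{f,D}(m): number of t-tuples (d_1..d_t) of pairwise distinct elements of D
   with f_1 d_1 + ... + f_t d_t = m.  Since all f_i, d_i >= 1, each d_i <= m,
   so tuples range over 'I_(m.+1). *)
Definition R (f : seq nat) (D : pred nat) (m : nat) : nat :=
  #|[set d : {ffun 'I_(size f) -> 'I_m.+1} |
      [&& injectiveb d, [forall i, D (d i)] &
          \sum_(i < size f) nth 0 f i * d i == m]]|.

(* There exist q*t pairwise distinct elements of D, arranged in q blocks
   (block j, position i <-> d_{jt+i+1}), each block satisfying the equation. *)
Definition has_dist (f : seq nat) (D : pred nat) (m q : nat) : bool :=
  [exists d : {ffun 'I_q * 'I_(size f) -> 'I_m.+1},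
    [&& injectiveb d, [forall k, D (d k)] &
        [forall j : 'I_q, \sum_(i < size f) nth 0 f i * d (j, i) == m]]].

(* R^Dist_{f,D}(m): the largest such q.  For t >= 1 and D of positive
   integers, any valid q satisfies q <= q*t <= m, so the max over q <= m
   is the true maximum (q = 0 is always valid). *)
Definition RDist (f : seq nat) (D : pred nat) (m : nat) : nat :=
  \max_(q < m.+1 | has_dist f D m q) q.

Definition unbounded (g : nat -> nat) : Prop :=
  forall N : nat, exists m : nat, 0 < m /\ N <= g m.

(* Main.v *)
From Stdlib Require Import Classical.
Require Import Defs.
From mathcomp Require Import all_boot.

Set Implicit Arguments. Unset Strict Implicit. Unset Printing Implicit Defensive.

Definition Rg (n : nat) (c : nat -> nat) (D : pred nat) (m : nat) : nat :=
  #|[set d : {ffun 'I_n -> 'I_m.+1} |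
      [&& injectiveb d, [forall i, D (d i)] &
          \sum_(i < n) c i * d i == m]]|.

Definition has_distg n (c : nat -> nat) (D : pred nat) (m q : nat) : bool :=
  [exists d : {ffun 'I_q * 'I_n -> 'I_m.+1},
    [&& injectiveb d, [forall k, D (d k)] &
        [forall j : 'I_q, \sum_(i < n) c i * d (j, i) == m]]].

Definition RDistg n c (D : pred nat) (m : nat) : nat :=
  \max_(q < m.+1 | has_distg n c D m q) q.

Definition unb0 (g : nat -> nat) : Prop := forall N, exists m, N <= g m.

Lemma R_Rg f D m : R f D m = Rg (size f) (nth 0 f) D m. Proof. by []. Qed.
Lemma RDist_RDistg f D m : RDist f D m = RDistg (size f) (nth 0 f) D m. Proof. by []. Qed.

Lemma Rg_ext n c c' D m : (forall k, k < n -> c k = c' k) -> Rg n c D m = Rg n c' D m.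
Proof.
move=> H; apply: eq_card => d; rewrite !inE; congr [&& _, _ & _ == m].
by apply: eq_bigr => i _; rewrite H.
Qed.

Lemma Rg_le1 n c D m : n <= 1 -> Rg n c D m <= 1.
Proof.
case: n => [|[|//]] _.
  by rewrite /Rg (leq_trans (max_card _)) // card_ffun !card_ord expn0.
rewrite /Rg; apply/card_le1_eqP => d d'; rewrite !inE => /and3P[_ _ Hd] /and3P[_ _ Hd'].
apply/ffunP => x; rewrite (ord1 x).
move: Hd Hd'; rewrite !big_ord1 => /eqP Hd /eqP Hd'.
have [c0|c0] := posnP (c (@ord0 0)).
  move: Hd; rewrite c0 mul0n => Hm; apply: val_inj => /=.
  subst m; have := ltn_ord (d ord0); have := ltn_ord (d' ord0).
  by rewrite !ltnS !leqn0 => /eqP -> /eqP ->.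
apply: val_inj; apply/eqP; rewrite -(eqn_pmul2l c0) Hd Hd'.
done.
Qed.

Lemma card_bigcup_le (I T : finType) (A : I -> {set T}) :
  #|\bigcup_i A i| <= \sum_i #|A i|.
Proof.
elim/big_rec2: _ => [|i B n _ IH]; first by rewrite cards0.
by rewrite (leq_trans (leq_card_setU _ _)) // leq_add2l.
Qed.
Section Family.
Variables (t m : nat).
Local Notation T := {ffun 'I_t -> 'I_m.+1}.
Definition x0 : T := [ffun _ => ord0].

Definition disjP (L : seq T) := forall j j' (i i' : 'I_t), j < size L -> j' < size L ->
  nth x0 L j i = nth x0 L j' i' -> j = j' /\ i = i'.

Lemma family (C q : nat) : forall S : {set T},
  (forall d, d \in S -> injectiveb d) ->
  (forall i u, #|[set d in S | d i == u]| <= C) ->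
  q * (t * t * C) < #|S| ->
  exists L : seq T, [/\ size L = q.+1, all (mem S) L & disjP L].
Proof.
elim: q => [|q IH] S Sinj Scnt Scard.
  have /set0Pn [d dS] : S != set0 by rewrite -card_gt0 (leq_trans _ Scard).
  exists [:: d]; split => //=; first by rewrite dS.
  move=> [|//] [|//] i i' _ _ /= E; split => //.
  by have /injectiveP := Sinj _ dS; apply.
have /set0Pn [d0 d0S] : S != set0 by rewrite -card_gt0 (leq_trans _ Scard).
pose S' := [set d in S | [forall i, forall j, d j != d0 i]].
have sub : S' \subset S by apply/subsetP => d; rewrite inE => /andP[].
have cardD : #|S :\: S'| <= t * t * C.
  have : S :\: S' \subset \bigcup_(p : 'I_t * 'I_t) [set d in S | d p.2 == d0 p.1].
    apply/subsetP => d; rewrite !inE negb_and => /andP[/orP[/negP nS|nF] dS]; first by [].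
    move: nF; rewrite negb_forall => /existsP [i]; rewrite negb_forall => /existsP [j].
    rewrite negbK => /eqP E; apply/bigcupP; exists (i, j) => //.
    by rewrite inE dS E eqxx.
  move/subset_leq_card/leq_trans; apply.
  apply: (leq_trans (card_bigcup_le _)).
  apply: (@leq_trans (\sum_(p : 'I_t * 'I_t) C)).
    by apply: leq_sum => p _; apply: Scnt.
  by rewrite sum_nat_const card_prod !card_ord.
have Scard' : q * (t * t * C) < #|S'|.
  have := cardsID S' S; rewrite (setIidPr sub) => E.
  rewrite -(ltn_add2r (t * t * C)) addnC -mulSn (leq_trans Scard) //.
  by rewrite -E leq_add2l.
have Scnt' i u : #|[set d in S' | d i == u]| <= C.
  apply: leq_trans (Scnt i u); apply: subset_leq_card; apply/subsetP => d.
  by rewrite !inE => /andP[/andP[-> _] ->].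
have [L [sL aL dL]] := IH S' (fun d dS => Sinj d (subsetP sub d dS)) Scnt' Scard'.
exists (d0 :: L); split => /=; first by rewrite sL.
  rewrite d0S /=; apply/allP => d dL'; apply: (subsetP sub).
  exact: (allP aL).
have inS' j : j < size L -> [forall i, forall k, (nth x0 L j) k != d0 i].
  move=> jL; have := allP aL _ (mem_nth x0 jL).
  by rewrite /= inE => /andP[].
move=> [|j] [|j'] i i' /= Hj Hj' E.
- split => //; by have /injectiveP := Sinj _ d0S; apply.
- by have := inS' j' Hj'; move=> /forallP/(_ i)/forallP/(_ i')/eqP; rewrite E.
- by have := inS' j Hj; move=> /forallP/(_ i')/forallP/(_ i)/eqP; rewrite E.
- by have [-> ->] := dL j j' i i' Hj Hj' E.
Qed.
End Family.
Definition Sg n (c : nat -> nat) (D : pred nat) m : {set {ffun 'I_n -> 'I_m.+1}} :=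
  [set d : {ffun 'I_n -> 'I_m.+1} |
      [&& injectiveb d, [forall i, D (d i)] &
          \sum_(i < n) c i * d i == m]].

Lemma Rg_Sg n c D m : Rg n c D m = #|Sg n c D m|. Proof. by []. Qed.

Lemma family_has_dist n c D m N (L : seq {ffun 'I_n -> 'I_m.+1}) :
  size L = N -> all (mem (Sg n c D m)) L -> disjP L -> has_distg n c D m N.
Proof.
move=> sL aL dL; apply/existsP.
exists [ffun k : 'I_N * 'I_n => nth (x0 n m) L k.1 k.2].
have inL (j : 'I_N) : nth (x0 n m) L j \in Sg n c D m.
  by have := allP aL _ (mem_nth (x0 n m) (_ : (j : nat) < size L)); apply; rewrite sL.
apply/and3P; split.
- apply/injectiveP => [[j i] [j' i']]; rewrite !ffunE /= => E.
  have jL : (j : nat) < size L by rewrite sL.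
  have j'L : (j' : nat) < size L by rewrite sL.
  have [Ej Ei] := dL j j' i i' jL j'L E.
  by rewrite Ei; congr pair; apply: val_inj.
- apply/forallP => [[j i]]; rewrite ffunE /=.
  by have := inL j; rewrite inE => /and3P[_ /forallP H _]; apply: H.
- apply/forallP => j.
  under eq_bigr do rewrite ffunE /=.
  by have := inL j; rewrite inE => /and3P[_ _ H].
Qed.

Lemma has_dist_le n c D m N : 2 <= n -> has_distg n c D m N -> N <= m.
Proof.
move=> n2 /existsP [d /and3P[/injectiveP inj _ _]].
have := leq_card _ inj; rewrite card_prod !card_ord => H.
have : N * 2 <= m.+1 by apply: leq_trans H; rewrite leq_mul2l n2 orbT.
clear inj H; rewrite muln2 -addnn; case: N {d} => // N.
by rewrite addSn ltnS addnS => H; apply: leq_trans H; rewrite ltnS leq_addl.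
Qed.

Lemma addKn' a b M : a + b = M -> b = M - a.
Proof. by move=> <-; rewrite addKn. Qed.

Lemma count_le n c D m (i : 'I_n.+1) (u : 'I_m.+1) :
  (forall k, k < n.+1 -> 0 < c k) ->
  #|[set d in Sg n.+1 c D m | d i == u]| <= Rg n (fun k => c (bump i k)) D (m - c i * u).
Proof.
move=> cpos; set m' := m - c i * u.
set A := [set d in Sg n.+1 c D m | d i == u].
have key d : d \in A -> [/\ d i = u, \sum_(k < n) c (bump i k) * d (lift i k) = m'
   & forall k, (d (lift i k) : nat) <= m'].
  rewrite !inE => /andP[/and3P[_ _ /eqP Hs] /eqP Hu].
  have Hs' : \sum_(k < n) c (bump i k) * d (lift i k) = m'.
    move: Hs; rewrite (bigD1_ord i) //= Hu => E.
    exact: addKn' E.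
  split => // k; rewrite -Hs' (bigD1 k) //=.
  apply: leq_trans (leq_addr _ _).
  by apply: leq_pmull; apply: (cpos (lift i k)); apply: ltn_ord.
pose phi (d : {ffun 'I_n.+1 -> 'I_m.+1}) : {ffun 'I_n -> 'I_m'.+1} :=
  [ffun k => inord (d (lift i k))].
have phiE d k : d \in A -> (phi d k : nat) = d (lift i k).
  by move=> dA; have [_ _ Hb] := key d dA; rewrite ffunE inordK // ltnS.
rewrite -(card_in_imset (f := phi)); last first.
  move=> d d' dA d'A E; have [Hu _ _] := key d dA; have [Hu' _ _] := key d' d'A.
  apply/ffunP => x; case: (unliftP i x) => [k|] ->; last by rewrite Hu Hu'.
  apply: val_inj.
  exact (etrans (esym (phiE d k dA)) (etrans (congr1 (fun g : {ffun 'I_n -> 'I_m'.+1} => (g k : nat)) E) (phiE d' k d'A))).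
rewrite Rg_Sg; apply: subset_leq_card; apply/subsetP => _ /imsetP[d dA ->].
have [Hu Hs Hb] := key d dA.
have := dA; rewrite !inE => /andP[/and3P[/injectiveP dinj /forallP dD _] _].
apply/and3P; split.
- apply/injectiveP => k k' /(congr1 val); rewrite /= !phiE //.
  by move/val_inj/dinj/lift_inj.
- by apply/forallP => k; rewrite phiE.
- apply/eqP; rewrite -[RHS]Hs; apply: eq_bigr => k _.
  by rewrite phiE.
Qed.

Lemma step n c D B m : 1 <= n -> (forall k, k < n.+1 -> 0 < c k) ->
  RDistg n.+1 c D m <= B ->
  Rg n.+1 c D m <= B * (n.+1 * n.+1 *
     \max_(i < n.+1) \max_(u < m.+1) Rg n (fun k => c (bump i k)) D (m - c i * u)).
Proof.
move=> n1 cpos HB; rewrite leqNgt; apply/negP => H.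
rewrite Rg_Sg in H.
have Sinj d : d \in Sg n.+1 c D m -> injectiveb d by rewrite inE => /and3P[].
have Scnt i u : #|[set d in Sg n.+1 c D m | d i == u]| <=
   \max_(i < n.+1) \max_(u < m.+1) Rg n (fun k => c (bump i k)) D (m - c i * u).
  have := @count_le n c D m i u cpos; move/leq_trans; apply.
  apply: (leq_trans _ (@leq_bigmax _ (fun j : 'I_n.+1 => \max_(v < m.+1) Rg n (fun k => c (bump j k)) D (m - c j * v)) i)).
  exact: (@leq_bigmax _ (fun v : 'I_m.+1 => Rg n (fun k => c (bump i k)) D (m - c i * v)) u).
have [L [sL aL dL]] := family Sinj Scnt H.
have hd := family_has_dist sL aL dL.
have Bm := has_dist_le (n1 : 2 <= n.+1) hd.
have HH := @leq_bigmax_cond _ (fun q : 'I_m.+1 => has_distg n.+1 c D m q) (fun q : 'I_m.+1 => (q : nat)) (Ordinal (Bm : B.+1 < m.+1)) hd.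
by have := leq_trans HH HB; rewrite ltnn.
Qed.
Lemma finbound (g : nat -> nat -> nat) k :
  (forall i, i < k -> exists N, forall m, g i m < N) ->
  exists N, forall i, i < k -> forall m, g i m < N.
Proof.
elim: k => [|k IH] H; first by exists 0.
have [N1 H1] := IH (fun i ik => H i (ltnW ik)).
have [N2 H2] := H k (ltnSn k).
exists (maxn N1 N2) => i; rewrite ltnS leq_eqVlt => /orP[/eqP ->|ik] m.
  by apply: leq_trans (H2 m) (leq_maxr _ _).
by apply: leq_trans (H1 i ik m) (leq_maxl _ _).
Qed.

Lemma sumn_subseq s1 s2 : subseq s1 s2 -> sumn s1 <= sumn s2.
Proof.
elim: s2 s1 => [|y s2 IH] [|x s1] //= H.
move: H; case: eqP => [<- H|_ H].
  by rewrite leq_add2l; apply: IH.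
by apply: leq_trans (IH _ H) (leq_addl _ _).
Qed.

Definition remi (s : seq nat) i := take i s ++ drop i.+1 s.

Lemma size_remi s i : i < size s -> size (remi s i) = (size s).-1.
Proof.
move=> iS0; rewrite /remi size_cat size_take iS0 size_drop.
by case: (size s) iS0 => // n; rewrite ltnS => H; rewrite subSS subnKC.
Qed.

Lemma subseq_remi s i : subseq (remi s i) s.
Proof.
rewrite /remi -{3}(cat_take_drop i s) cat_subseq //.
by rewrite -add1n -drop_drop drop_subseq.
Qed.

Lemma nth_remi s i k : i < size s -> k < (size s).-1 ->
  nth 0 (remi s i) k = nth 0 s (bump i k).
Proof.
move=> iS0 ks; rewrite /remi nth_cat size_take iS0 /bump.
case: ltnP => ki.
  by rewrite nth_take.
by rewrite nth_drop add1n addSn subnKC.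
Qed.

Lemma main D : forall n s, size s = n -> all (fun x => 0 < x) s -> unb0 (R s D) ->
  exists s', [/\ subseq s' s, 2 <= size s' & unb0 (RDist s' D)].
Proof.
have small s : size s <= 1 -> ~ unb0 (R s D).
  move=> ss U; have [m Hm] := U 2.
  by have := leq_trans Hm (Rg_le1 (nth 0 s) D m ss).
elim => [|n IH] s Hs pos U.
  by exfalso; apply: (small s) => //; rewrite Hs.
have n1 : 1 <= n.
  case: n {IH} Hs => // Hs; by exfalso; apply: (small s) => //; rewrite Hs.
case: (classic (unb0 (RDist s D))) => HD.
  by exists s; split => //; rewrite Hs.
have [B HB] : exists B, forall m, RDist s D m <= B.
  have [N HN] := not_all_ex_not _ _ HD.
  exists N => m; apply: ltnW; rewrite ltnNge; apply/negP => H.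
  by apply: HN; exists m.
set c := nth 0 s.
have cpos k : k < n.+1 -> 0 < c k.
  by move=> kn; apply: (allP pos); apply: mem_nth; rewrite Hs.
pose g i m := Rg n (fun k => c (bump i k)) D m.
have claim N : exists i, i < n.+1 /\ exists m', N <= g i m'.
  have [m Hm] := U (B * (n.+1 * n.+1 * N)).+1.
  have HB' : RDistg n.+1 c D m <= B by have := HB m; rewrite RDist_RDistg Hs.
  have Hst := step n1 cpos HB'.
  have HR : R s D m = Rg n.+1 c D m by rewrite R_Rg Hs.
  rewrite HR in Hm.
  case: (boolP [exists i : 'I_n.+1, exists u : 'I_m.+1, N < g i (m - c i * u)]).
    move=> /existsP [i /existsP [u Hu]]; exists i; split => //.
    by exists (m - c i * u); apply: ltnW.
  rewrite negb_exists => /forallP Hall; exfalso.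
  have Cle : \max_(i < n.+1) \max_(u < m.+1) Rg n (fun k => c (bump i k)) D (m - c i * u) <= N.
    apply/bigmax_leqP => i _; apply/bigmax_leqP => u _.
    by have := Hall i; rewrite negb_exists => /forallP /(_ u); rewrite -leqNgt.
  have := leq_trans Hm Hst.
  by rewrite ltnNge leq_mul2l leq_mul2l Cle !orbT.
case: (classic (exists i, i < n.+1 /\ unb0 (g i))) => [[i [iN Ui]]|Hno].
  have iS : i < size s by rewrite Hs.
  have sz : size (remi s i) = n by rewrite size_remi // Hs.
  have pos' : all (fun x => 0 < x) (remi s i).
    by apply/allP => x /(mem_subseq (subseq_remi s i)) xs; exact: (allP pos) x xs.
  have U' : unb0 (R (remi s i) D).
    move=> N; have [m' Hm'] := Ui N; exists m'; rewrite R_Rg sz.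
    rewrite (@Rg_ext _ _ (fun k => c (bump i k))) //.
    by move=> k kn; rewrite nth_remi // Hs.
  have [s' [s's s'2 s'U]] := IH _ sz pos' U'.
  by exists s'; split => //; apply: subseq_trans s's (subseq_remi s i).
have bnd : forall i, i < n.+1 -> exists N, forall m, g i m < N.
  move=> i iN; have nU : ~ unb0 (g i) by move=> Ui; apply: Hno; exists i.
  have [N HN] := not_all_ex_not _ _ nU; exists N => m.
  by rewrite ltnNge; apply/negP => H; apply: HN; exists m.
have [N HN] := finbound bnd.
have [i [iN [m' Hm']]] := claim N.
by have := leq_ltn_trans Hm' (HN i iN m'); rewrite ltnn.
Qed.

Theorem mainTheorem9 (h : nat) (D : pred nat) :
  2 <= h ->
  (forall d, D d -> 0 < d) ->
  (exists f : seq nat,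
      [/\ 2 <= size f <= 2 * h - 1, all (fun x => 0 < x) f,
          sumn f <= 2 * h & unbounded (R f D)]) ->
  exists f' : seq nat,
      [/\ 2 <= size f' <= 2 * h - 1, all (fun x => 0 < x) f',
          sumn f' <= 2 * h & unbounded (RDist f' D)].
Proof.
move=> _ _ [f [/andP[_ sf] pos sumf U]].
have U0 : unb0 (R f D) by move=> N; have [m [_ Hm]] := U N; exists m.
have [s' [s's s'2 s'U]] := main (erefl (size f)) pos U0.
exists s'; split.
- by rewrite s'2 /= (leq_trans (size_subseq s's) sf).
- by apply/allP => x /(mem_subseq s's) xs; exact: (allP pos) x xs.
- exact: leq_trans (sumn_subseq s's) sumf.
move=> N; have [m Hm] := s'U N.+1; exists m; split; last exact: ltnW.
case: m Hm => // Hm; exfalso.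
have : RDist s' D 0 <= 0.
  by apply/bigmax_leqP => q _; case: q => [[|]].
by move=> H; have := leq_trans Hm H.
Qed.
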